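(* Let $v$ be a positive integer all of whose maximal prime power factors (i.e. the prime powers $p^e$ with $p^e\mid v$, $p^{e+1}\nmid v$) are congruent to $1$ modulo $4$. Then there exists a $(3v,3,4,1)$-BRDF.
   Context: Let $G$ be a finite group written additively, $H$ a subgroup, and $k\ge2,\lambda\ge1$ integers. A $(G,H,k,\lambda)$-relative difference family (RDF) is a collection of $k$-subsets of $G$ (base blocks) such that the multiset of differences $x-y$ ($x\ne y$ in a common base block) contains every element of $G\setminus H$ exactly $\lambda$ times and no element of $H$. A $(G,H,k,\lambda)$-Banff relative difference family (BRDF) is a $(G,H,k,\lambda)$-RDF such that additionally (2) all base blocks are disjoint from $H$, and (3) the base blocks and their negatives $-B=\{-b:b\in B\}$ are pairwise disjoint. A $(g,h,k,\lambda)$-BRDF means a $(G,H,k,\lambda)$-BRDF for some group $G$ of order $g$ and subgroup $H$ of order $h$. *)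

(* Defs.v *)
From HB Require Import structures.
From mathcomp Require Import all_boot all_order all_algebra.
Set Implicit Arguments. Unset Strict Implicit. Unset Printing Implicit Defensive.
Import GRing.Theory.
Local Open Scope ring_scope.

Definition is_subgroup (G : finZmodType) (H : {set G}) : Prop :=
  0 \in H /\ (forall x y, x \in H -> y \in H -> x - y \in H).

Definition negset (G : finZmodType) (B : {set G}) : {set G} :=
  [set - b | b in B].

Definition diff_count (G : finZmodType) (B : {set G}) (g : G) : nat :=
  #|[set p : G * G | [&& p.1 \in B, p.2 \in B, p.1 != p.2 & p.1 - p.2 == g]]|.

Definition family_diff_count (G : finZmodType) (F : seq {set G}) (g : G) : nat :=
  (\sum_(B <- F) diff_count B g)%N.

Definition RDF (G : finZmodType) (H : {set G}) (k lam : nat) (F : seq {set G}) : Prop :=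
  (forall B, B \in F -> #|B| = k) /\
  (forall g : G, g \notin H -> family_diff_count F g = lam) /\
  (forall g : G, g \in H -> family_diff_count F g = 0%N).

(* (G, H, k, lambda)-Banff relative difference family. Condition (3): the
   2|F| sets B_1,...,B_n,-B_1,...,-B_n are pairwise disjoint. *)
Definition BRDF (G : finZmodType) (H : {set G}) (k lam : nat) (F : seq {set G}) : Prop :=
  RDF H k lam F /\
  (forall B, B \in F -> [disjoint B & H]) /\
  (forall i j, (i < size F)%N -> (j < size F)%N ->
     [disjoint nth set0 F i & negset (nth set0 F j)] /\
     (i != j -> [disjoint nth set0 F i & nth set0 F j] /\
                [disjoint negset (nth set0 F i) & negset (nth set0 F j)])).

Definition exists_BRDF (g h k lam : nat) : Prop :=
  exists (G : finZmodType) (H : {set G}),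
    #|G| = g /\ is_subgroup H /\ #|H| = h /\ exists F : seq {set G}, BRDF H k lam F.

(* Main.v *)
From HB Require Import structures.
Require Import Defs.
From mathcomp Require Import all_boot all_order all_algebra.
From mathcomp Require Import zify.
Set Implicit Arguments. Unset Strict Implicit. Unset Printing Implicit Defensive.
Import GRing.Theory.

Definition PT (A B : finZmodType) := (A * B)%type.
HB.instance Definition _ (A B : finZmodType) := GRing.Zmodule.on (PT A B).
HB.instance Definition _ (A B : finZmodType) := Finite.on (PT A B).

Section Constr.
Local Open Scope ring_scope.
Variables (A : finZmodType) (s : A -> A).
Hypothesis sB : forall x y, s (x - y) = s x - s y.
Hypothesis ss : forall x, s (s x) = - x.
Hypothesis odd2 : forall x : A, x + x = 0 -> x = 0.

Lemma s0 : s 0 = 0. Proof. by move: (sB 0 0); rewrite !subrr. Qed.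
Lemma sN x : s (- x) = - s x. Proof. by rewrite -sub0r sB s0 sub0r. Qed.
Lemma sD x y : s (x + y) = s x + s y. Proof. by have := sB x (- y); rewrite opprK sN opprK. Qed.
Lemma fix0 x : s x = x -> x = 0.
Proof. move=> h; apply: odd2; have := ss x; rewrite h h => e. by rewrite {1}e addNr. Qed.
Lemma anti0 x : s x = - x -> x = 0.
Proof. move=> h; apply: odd2; have := ss x; rewrite h sN h opprK => e. by rewrite {1}e addNr. Qed.
Lemma sne0 x : x != 0 -> s x != 0.
Proof. move=> x0; apply/eqP => h; move/eqP: x0; apply; have := ss x; rewrite h s0 => e; by apply: oppr_inj; rewrite -e oppr0. Qed.

Section Neq.
Variable r : A.
Hypothesis r0 : r != 0.
Lemma e_r_sr : (r == s r) = false.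
Proof. apply/negbTE; apply: contra r0 => /eqP h; apply/eqP/fix0; by rewrite -h. Qed.
Lemma e_sr_r : (s r == r) = false. Proof. by rewrite eq_sym e_r_sr. Qed.
Lemma e_r_nr : (r == - r) = false.
Proof. apply/negbTE; apply: contra r0 => /eqP h; apply/eqP/odd2; by rewrite {1}h addNr. Qed.
Lemma e_nr_r : (- r == r) = false. Proof. by rewrite eq_sym e_r_nr. Qed.
Lemma e_r_nsr : (r == - s r) = false.
Proof. apply/negbTE; apply: contra r0 => /eqP h; apply/eqP/anti0; by rewrite {2}h opprK. Qed.
Lemma e_nsr_r : (- s r == r) = false. Proof. by rewrite eq_sym e_r_nsr. Qed.
Lemma e_sr_nr : (s r == - r) = false.
Proof. apply/negbTE; apply: contra r0 => /eqP h; apply/eqP/anti0; by rewrite h. Qed.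
Lemma e_nr_sr : (- r == s r) = false. Proof. by rewrite eq_sym e_sr_nr. Qed.
Lemma e_sr_nsr : (s r == - s r) = false.
Proof. apply/negbTE; apply: contra (sne0 r0) => /eqP h; apply/eqP/odd2; by rewrite {1}h addNr. Qed.
Lemma e_nsr_sr : (- s r == s r) = false. Proof. by rewrite eq_sym e_sr_nsr. Qed.
Lemma e_nr_nsr : (- r == - s r) = false. Proof. by rewrite eqr_opp e_r_sr. Qed.
Lemma e_nsr_nr : (- s r == - r) = false. Proof. by rewrite eq_sym e_nr_nsr. Qed.
End Neq.

Ltac neqs h := rewrite ?(e_r_sr h) ?(e_sr_r h) ?(e_r_nr h) ?(e_nr_r h) ?(e_r_nsr h) ?(e_nsr_r h)
  ?(e_sr_nr h) ?(e_nr_sr h) ?(e_sr_nsr h) ?(e_nsr_sr h) ?(e_nr_nsr h) ?(e_nsr_nr h).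

Definition orb (y : A) : {set A} := [set y; s y; -y; -s y].
Lemma orb_refl y : y \in orb y. Proof. by rewrite /orb !inE eqxx ?orbT. Qed.
Lemma orbE y z : z \in orb y -> orb z = orb y.
Proof.
rewrite /orb !inE -!orbA => /or4P [] /eqP -> ; apply/setP => x; rewrite !inE ?sN ?ss ?opprK;
 by case: (x == y); case: (x == s y); case: (x == -y); case: (x == - s y).
Qed.
Lemma orb_ne0 y z : y != 0 -> z \in orb y -> z != 0.
Proof.
move=> y0; rewrite /orb !inE -!orbA => /or4P [] /eqP ->; rewrite ?oppr_eq0 //; exact: sne0.
Qed.
Lemma card_orb y : y != 0 -> #|orb y| = 4%N.
Proof.
move=> y0; have -> : #|orb y| = #|[:: y; s y; -y; -s y]|.
  by apply: eq_card => x; rewrite /orb !inE -!orbA.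
apply/card_uniqP; rewrite /= !inE; neqs y0; by [].
Qed.

Definition rep (y : A) : A := odflt 0 [pick z in orb y].
Lemma rep_in y : rep y \in orb y.
Proof. rewrite /rep; case: pickP => [z //|/(_ y)]; by rewrite orb_refl. Qed.
Lemma rep_eq y z : z \in orb y -> rep z = rep y.
Proof. by move/orbE; rewrite /rep => ->. Qed.
Lemma rep_rep y : rep (rep y) = rep y. Proof. exact: rep_eq (rep_in y). Qed.
Lemma in_orb_rep y : y \in orb (rep y).
Proof. by rewrite (orbE (rep_in y)) orb_refl. Qed.
Lemma orb_rep y : orb (rep y) = orb y. Proof. exact: orbE (rep_in y). Qed.
Lemma rep_ne0 y : y != 0 -> rep y != 0.
Proof. move=> y0; exact: orb_ne0 y0 (rep_in y). Qed.
Lemma N_orb y : - y \in orb y. Proof. by rewrite /orb !inE eqxx ?orbT. Qed.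
Lemma S_orb y : s y \in orb y. Proof. by rewrite /orb !inE eqxx ?orbT. Qed.

Definition labr (r w : A) : 'Z_3 := if (w == r) || (w == - r) then 1 else -1.
Definition lab w := labr (rep w) w.

Lemma labr_s r w : r != 0 -> w \in orb r -> labr r (s w) = - labr r w.
Proof.
move=> r0; rewrite /orb !inE -!orbA => /or4P [] /eqP ->; rewrite /labr ?sN ?ss ?opprK; neqs r0;
  by rewrite ?eqxx ?orbT ?opprK.
Qed.
Lemma labS w : w != 0 -> lab (s w) = - lab w.
Proof.
move=> w0.
rewrite /lab (rep_eq (S_orb w)) labr_s ?rep_ne0 //; exact: in_orb_rep.
Qed.
Lemma labN w : lab (- w) = lab w.
Proof.
rewrite /lab (rep_eq (N_orb w)) /labr eqr_opp eqr_oppLR orbC; by [].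
Qed.
Lemma lab_cases w : (lab w == 1) || (lab w == -1).
Proof. by rewrite /lab /labr; case: ifP; rewrite eqxx ?orbT. Qed.


Definition G := PT 'Z_3 A.
Definition pt w : G := (lab w, w).
Definition Bk y : {set G} := pt @: orb y.
Definition Y := [seq y <- enum A | (y != 0) && (rep y == y)].
Definition Fam := map Bk Y.
Definition Hs : {set G} := [set g : G | g.2 == 0].
Definition cond (g : G) w := (g != 0) && (pt w - g \in Bk (rep w)).

Lemma subP (a c : 'Z_3) (b d : A) : ((a, b) : G) - (c, d) = (a - c, b - d).
Proof. by []. Qed.

Lemma pt_inj : injective pt. Proof. by move=> x y /(congr1 snd). Qed.
Lemma mem_Bk y w : (pt w \in Bk y) = (w \in orb y).
Proof. by rewrite mem_imset //; exact: pt_inj. Qed.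
Lemma card_Bk y : y != 0 -> #|Bk y| = 4%N.
Proof. by move=> y0; rewrite card_imset ?card_orb //; exact: pt_inj. Qed.
Lemma mem_Y y : (y \in Y) = (y != 0) && (rep y == y).
Proof. by rewrite mem_filter mem_enum andbT. Qed.
Lemma uniq_Y : uniq Y. Proof. by rewrite filter_uniq // enum_uniq. Qed.

Lemma diffB y g : y != 0 -> rep y = y ->
  diff_count (Bk y) g = #|[set w in orb y | cond g w]|.
Proof.
move=> y0 ry; rewrite /diff_count.
have -> : [set p : G * G | [&& p.1 \in Bk y, p.2 \in Bk y, p.1 != p.2 & p.1 - p.2 == g]]
   = (fun w => (pt w, pt w - g)) @: [set w in orb y | cond g w].
  apply/setP => [[p1 p2]]; rewrite inE /=; apply/idP/imsetP.
  - case/and4P => /imsetP [w wo ->] H2 Hne /eqP Hd.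
    have E2 : p2 = pt w - g by rewrite -Hd subKr.
    exists w => //; last by rewrite E2.
    rewrite inE wo /cond (rep_eq wo) ry -E2 H2 andbT.
    by apply: contra Hne => /eqP g0; rewrite E2 g0 subr0.
  - case=> w; rewrite inE => /andP [wo /andP [gne Hin]] [-> ->].
    rewrite (rep_eq wo) ry in Hin.
    rewrite Hin mem_Bk wo subKr eqxx /= andbT.
    by apply: contra gne => /eqP E; rewrite -(subKr (pt w) g) -E subrr.
rewrite card_imset //; move=> a b /(congr1 fst); exact: pt_inj.
Qed.

Lemma orb_repP y w : y != 0 -> rep y = y -> (w \in orb y) = (w != 0) && (rep w == y).
Proof.
move=> y0 ry; apply/idP/andP.
  by move=> wo; split; [exact: orb_ne0 wo | rewrite (rep_eq wo) ry].
by case=> _ /eqP <-; exact: in_orb_rep.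
Qed.

Lemma fam_count g : family_diff_count Fam g = #|[set w | (w != 0) && cond g w]|.
Proof.
rewrite /family_diff_count /Fam big_map big_filter big_enum_cond.
rewrite -sum1_card [X in _ = X](partition_big rep (fun y => (y != 0) && (rep y == y))); last first.
  by move=> w; rewrite inE => /andP [w0 _]; rewrite rep_ne0 // rep_rep eqxx.
apply: eq_big => [y|y /andP [_ /andP [y0 /eqP ry]]]; first by [].
rewrite diffB // -sum1_card; apply: eq_bigl => w.
rewrite in_set (orb_repP _ y0 ry) in_set.
by case: (w != 0); case: (rep w == y); case: (cond g w).
Qed.

Lemma z3_1 (l c : 'Z_3) : (l == 1) || (l == -1) -> (l == l - c) = (c == 0).
Proof. by case: l => [[|[|[|l]]] Hl] //; case: c => [[|[|[|c]]] Hc]. Qed.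
Lemma z3_2 (l c : 'Z_3) : (l == 1) || (l == -1) -> (- l == l - c) = (c == - l).
Proof. by case: l => [[|[|[|l]]] Hl] //; case: c => [[|[|[|c]]] Hc]. Qed.
Lemma z3_3 (l : 'Z_3) : (l == 1) || (l == -1) -> (0 == - l) = false.
Proof. by case: l => [[|[|[|l]]] Hl]. Qed.
Lemma z3_4 (l c : 'Z_3) : (l == 1) || (l == -1) -> c != 0 -> (c == l) = ~~ (l == - c).
Proof. by case: l => [[|[|[|l]]] Hl] //; case: c => [[|[|[|c]]] Hc]. Qed.
Lemma z3_5 (l : 'Z_3) : (l == 1) || (l == -1) -> (l == - l) = false.
Proof. by case: l => [[|[|[|l]]] Hl]. Qed.

Lemma cond_char c r w :
  cond (c, r) w = ((c, r) != 0 :> G) && ((w - r \in orb w) && (lab (w - r) == lab w - c)).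
Proof.
rewrite /cond /Bk orb_rep subP; congr andb.
apply/imsetP/andP => [[z zo [E1 E2]]|[zo /eqP E]].
  by rewrite E2 zo E1 eqxx.
by exists (w - r) => //; rewrite /pt E.
Qed.

Lemma eq_subswap (x y z : A) : (x - y == z) = (y == x - z).
Proof. by apply/eqP/eqP => [<-|->]; rewrite subKr. Qed.
Lemma eqAndLab x t l : (x == t) && (lab x == l) = (x == t) && (lab t == l).
Proof. by case: eqP => [->|]. Qed.

Lemma cond_exp c r w : w != 0 -> r != 0 -> cond (c, r) w =
  [|| (r == w + w) && (c == 0), (r == w - s w) && (c == - lab w)
    | (r == w + s w) && (c == - lab w)].
Proof.
move=> w0 r0; rewrite cond_char.
have -> : ((c, r) != 0 :> G) = true.
  by apply/negP => /eqP /(congr1 snd) /= E; move: r0; rewrite E eqxx.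
rewrite /= /orb !inE -!orbA !andb_orl.
rewrite (eqAndLab _ w) (eqAndLab _ (s w)) (eqAndLab _ (-w)) (eqAndLab _ (- s w)).
rewrite !labN (labS w0) !eq_subswap subrr !opprK (negbTE r0) /=.
have lc := lab_cases w.
rewrite (z3_1 _ lc) (z3_2 _ lc).
by case: (r == w - s w); case: (r == w + w); case: (r == w + s w); case: (c == 0); case: (c == - lab w).
Qed.

Lemma addinj (f : A -> A) : (forall x y, f (x - y) = f x - f y) ->
  (forall x, f x = 0 -> x = 0) -> injective f.
Proof.
move=> fB f0 x y E; apply/eqP; rewrite -subr_eq0; apply/eqP/f0; by rewrite fB E subrr.
Qed.

Lemma dbl_bij : bijective (fun x : A => x + x).
Proof.
apply: injF_bij; apply: addinj => [x y|x /odd2 //].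
by rewrite opprD addrACA.
Qed.
Lemma m1_bij : bijective (fun x : A => x - s x).
Proof.
apply: injF_bij; apply: addinj => [x y|x /eqP]; first by rewrite sB !opprD !opprK addrACA.
by rewrite subr_eq0 => /eqP /esym /fix0.
Qed.
Lemma p1_inj : injective (fun x : A => x + s x).
Proof.
apply: addinj => [x y|x /eqP]; first by rewrite sB opprD addrACA.
by rewrite addr_eq0 => /eqP E; apply: anti0; rewrite {2}E opprK.
Qed.

Lemma count_eval g : #|[set w | (w != 0) && cond g w]| = (g \notin Hs).
Proof.
case: g => c r; rewrite /Hs inE /=.
have [-> | r0] := eqVneq r 0.
  apply/eqP; rewrite cards_eq0; apply/eqP/setP => w; rewrite !inE.
  apply/negbTE/negP => /andP [w0]; rewrite cond_char subr0 orb_refl /=.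
  rewrite (z3_1 _ (lab_cases w)) => /andP [/eqP c0 /eqP c00]; apply: c0.
  by rewrite c00.
apply/eqP/cards1P.
have [hf hK Kh] := dbl_bij.
have [mf mK Km] := m1_bij.
have [-> | c0] := eqVneq c 0.
  exists (hf r); apply/setP => w; rewrite !inE.
  have [->|w0] := eqVneq w 0.
    apply/esym/negbTE; apply: contra r0 => /eqP E.
    by rewrite -[r]Kh -E addr0.
  rewrite cond_exp // eqxx (z3_3 (lab_cases w)) !andbF !orbF andbT /=.
  by apply/eqP/eqP => [->|->]; rewrite ?hK ?Kh.
set w1 := mf r.
have w10 : w1 != 0.
  by apply: contra r0 => /eqP E; rewrite -[r]Km /= -/w1 E s0 subr0.
have E2 : (- s w1) + s (- s w1) = r by rewrite sN ss opprK addrC /w1 Km.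
exists (if lab w1 == - c then w1 else - s w1); apply/setP => w; rewrite !inE.
have [->|w0] := eqVneq w 0.
  by case: ifP => _; apply/esym/negbTE; rewrite eq_sym ?oppr_eq0 ?sne0.
rewrite cond_exp // (negbTE c0) !andbF /=.
have -> : (r == w - s w) = (w == w1) by rewrite /w1; apply/eqP/eqP => [->|->]; rewrite ?mK ?Km.
have -> : (r == w + s w) = (w == - s w1).
  by apply/eqP/eqP => [E|->//]; apply: p1_inj; rewrite /= -E E2.
have [->|nw1] := eqVneq w w1.
  rewrite /= (e_r_nsr w10) orbF.
  by case: ifP => H; rewrite [c == _]eq_sym eqr_oppLR H ?eqxx ?(e_r_nsr w10).
have [->|nw2] := eqVneq w (- s w1).
  rewrite /= labN (labS w10) opprK (z3_4 (lab_cases w1) c0).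
  by case: ifP => _; rewrite ?eqxx ?(e_nsr_r w10).
rewrite /=; case: ifP => _; apply/esym/negbTE; by [rewrite nw1 | rewrite nw2].
Qed.

Lemma disjointI (T : finType) (C D : {set T}) :
  (forall x, x \in C -> x \in D -> False) -> [disjoint C & D].
Proof.
move=> h; rewrite -setI_eq0; apply/eqP/setP => x; rewrite !inE.
by apply/negbTE/andP => [[]]; apply: h.
Qed.

Lemma nth_Fam i : (i < size Y)%N -> nth set0 Fam i = Bk (nth 0 Y i).
Proof. by move=> hi; rewrite /Fam (nth_map 0). Qed.

Lemma disj_neg a b : [disjoint Bk a & negset (Bk b)].
Proof.
apply: disjointI => x /imsetP [w wo ->] /imsetP [z /imsetP [u uo ->] E].
have E2 := congr1 snd E; have E1 := congr1 fst E; rewrite /= in E1 E2.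
move: E1; rewrite E2 labN => /eqP; by rewrite z3_5 // lab_cases.
Qed.

Lemma disj_Bk a b : a \in Y -> b \in Y -> a != b -> [disjoint Bk a & Bk b].
Proof.
rewrite !mem_Y => /andP [a0 /eqP ra] /andP [b0 /eqP rb] nab.
apply: disjointI => x /imsetP [w wo ->] /imsetP [u uo /pt_inj E].
move: wo uo; rewrite (orb_repP _ a0 ra) (orb_repP _ b0 rb) E => /andP [_ /eqP E1] /andP [_ /eqP E2].
by move: nab; rewrite -E1 -E2 eqxx.
Qed.

Lemma disj_nBk a b : a \in Y -> b \in Y -> a != b -> [disjoint negset (Bk a) & negset (Bk b)].
Proof.
move=> aY bY nab; apply: disjointI => x /imsetP [p pa ->] /imsetP [q qb /oppr_inj E].
by move: (disjointFr (disj_Bk aY bY nab) pa); rewrite E qb.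
Qed.

Lemma brdf_main : exists_BRDF (3 * #|A|) 3 4 1.
Proof.
exists (PT 'Z_3 A), Hs; split; [|split; [|split]].
- by rewrite /PT card_prod card_ord.
- split; first by rewrite inE.
  by move=> x y; rewrite !inE => /eqP hx /eqP hy; rewrite /= hx hy subrr.
- have -> : Hs = (fun c => (c, 0) : G) @: [set: 'Z_3].
    apply/setP => [[c r]]; rewrite inE /=; apply/eqP/imsetP => [->|[d _ [_ ->]]] //.
    by exists c; rewrite ?inE.
  by rewrite card_imset ?cardsT ?card_ord // => x y [].
- exists Fam; split; [split; [|split]|split].
  + move=> B /mapP [y yY ->]; apply: card_Bk; by move: yY; rewrite mem_Y => /andP [].
  + by move=> g gH; rewrite fam_count count_eval gH.
  + by move=> g gH; rewrite fam_count count_eval gH.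
  + move=> B /mapP [y yY ->]; apply: disjointI => x /imsetP [w wo ->].
    move: yY; rewrite mem_Y => /andP [y0 _]; rewrite inE /=.
    by move/negbTE: (orb_ne0 y0 wo) => ->.
  + move=> i j hi hj; rewrite -/Fam; move: (hi) (hj); rewrite /Fam size_map => hi' hj'.
    rewrite !nth_Fam //; split; first exact: disj_neg.
    move=> nij; have nY : nth 0 Y i != nth 0 Y j by rewrite nth_uniq // uniq_Y.
    by split; [apply: disj_Bk | apply: disj_nBk]; rewrite // mem_nth.
Qed.

End Constr.
Local Open Scope ring_scope.

Lemma sqrtm1 p : prime p -> (p %% 4 = 1)%N -> exists e : 'Z_p, e * e = -1.
Proof.
move=> pr p4; have p1 : (1 < p)%N := prime_gt1 pr.
set k := (p %/ 4)%N.
have pE : p = (4 * k).+1 by rewrite {1}(divn_eq p 4) p4 /k; lia.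
exists ((2 * k)`!)%:R.
have W : ((4 * k)`!)%:R = -1 :> 'Z_p.
  have := Wilson p1; rewrite pr => /esym; rewrite /dvdn => /eqP H.
  have := Zp_nat_mod p1 ((p.-1)`!).+1; rewrite H => /esym.
  rewrite mulrS => /eqP; rewrite addr_eq0 => /eqP E.
  have pm : p.-1 = (4 * k)%N by rewrite pE.
  by rewrite pm in E; rewrite -[LHS]opprK -E.
rewrite -W; apply/esym.
rewrite fact_prod natr_prod (big_cat_nat _ (n := (2 * k).+1)) //=; last by lia.
rewrite -natr_prod -fact_prod; congr (_ * _).
rewrite -[((2 * k).+1)%N]add0n big_addn.
rewrite (eq_big_nat _ _ (F2 := fun i => (-1) * ((2 * k - i)%N%:R : 'Z_p))); last first.
  move=> i /andP [_ hi]; rewrite mulN1r; apply/eqP; rewrite -addr_eq0 -natrD.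
  have -> : (i + (2 * k).+1 + (2 * k - i) = p)%N by rewrite pE; lia.
  by rewrite pchar_Zp.
rewrite big_split /= prodr_const_nat.
have -> : ((4 * k).+1 - (2 * k).+1 - 0 = 2 * k)%N by lia.
rewrite exprM sqrrN !expr1n mul1r.
rewrite big_nat_rev /= fact_prod natr_prod big_add1 /=.
have -> : ((4 * k).+1 - (2 * k).+1 = 2 * k)%N by lia.
apply: eq_big_nat => i /andP [_ hi]; congr (_%:R); lia.
Qed.

Local Open Scope ring_scope.

Definition Qp (n : nat) := exists (A : finZmodType) (s : A -> A),
  [/\ #|A| = n, (forall x y, s (x - y) = s x - s y), (forall x, s (s x) = - x)
    & (forall x : A, x + x = 0 -> x = 0)].

Lemma Q_brdf n : Qp n -> exists_BRDF (3 * n) 3 4 1.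
Proof. by case=> A [s [cA sB ss o2]]; rewrite -cA; exact: brdf_main sB ss o2. Qed.

Definition UT := {ffun 'I_0 -> 'Z_3}.
HB.instance Definition _ := GRing.Zmodule.on UT.
HB.instance Definition _ := Finite.on UT.

Lemma UT_eq (x y : UT) : x = y. Proof. by apply/ffunP => [[]]. Qed.

Lemma Q1 : Qp 1.
Proof.
exists UT, id; split => // [|x|x _]; last exact: UT_eq.
  by rewrite card_ffun !card_ord.
exact: UT_eq.
Qed.

Lemma Qmul m n : Qp m -> Qp n -> Qp (m * n).
Proof.
case=> A [sA [cA sBA ssA oA]] [B [sB [cB sBB ssB oB]]].
exists (PT A B), (fun x => (sA x.1, sB x.2)); split.
- by rewrite /PT card_prod cA cB.
- by move=> [a b] [c d] /=; rewrite sBA sBB.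
- by move=> [a b] /=; rewrite ssA ssB.
- move=> [a b] E; have E1 := congr1 fst E; have E2 := congr1 snd E; rewrite /= in E1 E2.
  by rewrite (oA _ E1) (oB _ E2).
Qed.

Lemma Qpow n k : Qp n -> Qp (n ^ k).
Proof. move=> hn; elim: k => [|k IH]; first exact: Q1. by rewrite expnS; apply: Qmul. Qed.

Lemma Zp_odd2 p (a : 'Z_p) : (1 < p)%N -> odd p -> a + a = 0 -> a = 0.
Proof.
move=> p1 op E.
have u : (2%:R : 'Z_p) \is a GRing.unit by rewrite unitZpE // coprimen2.
by rewrite -(mulrK u a) mulr_natr mulr2n E mul0r.
Qed.

Lemma card_Zpt p : (1 < p)%N -> #|{: 'Z_p}| = p.
Proof. by move=> p1; rewrite card_ord Zp_cast. Qed.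

Lemma Qsq p : (1 < p)%N -> odd p -> Qp (p * p).
Proof.
move=> p1 op.
exists (PT 'Z_p 'Z_p), (fun x => (- x.2, x.1)); split.
- by rewrite /PT card_prod card_Zpt.
- move=> [a b] [c d] /=.
  have -> : ((- b, a) : PT 'Z_p 'Z_p) - (- d, c) = (- b - - d, a - c) by [].
  by rewrite opprD.
- by [].
- move=> [a b] E; have E1 := congr1 fst E; have E2 := congr1 snd E; rewrite /= in E1 E2.
  by rewrite (Zp_odd2 p1 op E1) (Zp_odd2 p1 op E2).
Qed.

Lemma Qprime p : prime p -> (p %% 4 = 1)%N -> Qp p.
Proof.
move=> pr p4; have p1 : (1 < p)%N := prime_gt1 pr.
have op : odd p by rewrite {1}(divn_eq p 4) p4 oddD oddM andbF.
have [e ee] := sqrtm1 pr p4.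
exists 'Z_p, (fun x => e * x); split.
- exact: card_Zpt.
- by move=> x y; rewrite mulrBr.
- by move=> x; rewrite mulrA ee mulN1r.
- by move=> x; apply: Zp_odd2.
Qed.

Lemma odd_form p : odd p -> p = ((p./2).*2 + 1)%N.
Proof. by move=> op; rewrite -{1}(odd_double_half p) op addnC. Qed.

Lemma sq_mod4 p j : odd p -> ((p * p) ^ j %% 4 = 1)%N.
Proof.
move=> op; have hp := odd_form op.
have h : (p * p %% 4 = 1)%N.
  rewrite -modnMm; have : (p %% 4 = 1 \/ p %% 4 = 3)%N by lia.
  by case=> ->.
by rewrite -modnXm h exp1n.
Qed.

Lemma Qpp p e : prime p -> (p ^ e = 1 %[mod 4])%N -> Qp (p ^ e).
Proof.
move=> pr he'; have he : (p ^ e %% 4 = 1)%N by rewrite he'.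
have [-> | e0] := posnP e; first by rewrite expn0; exact: Q1.
have op : odd p.
  have : odd (p ^ e) by rewrite {1}(divn_eq (p ^ e) 4) he oddD oddM andbF.
  by rewrite oddX (gtn_eqF e0).
have p1 := prime_gt1 pr.
have E : (p ^ e = p ^ (odd e) * (p * p) ^ e./2)%N.
  by rewrite -{1}(odd_double_half e) expnD -mul2n expnM expnS expn1.
rewrite E; case oe : (odd e); rewrite ?expn1 ?expn0 ?mul1n; last exact: Qpow (Qsq p1 op).
apply: Qmul; last exact: Qpow (Qsq p1 op).
apply: Qprime => //.
move: he; rewrite E oe expn1 -modnMm sq_mod4 // muln1 modn_mod; by [].
Qed.

Lemma Qv v : (0 < v)%N ->
  (forall p : nat, prime p -> (p %| v)%N -> (p ^ logn p v = 1 %[mod 4])%N) -> Qp v.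
Proof.
have [n] := ubnP v; elim: n v => // n IH v hv v0 hyp.
case: (ltnP 1 v) => [v1 | v1]; last first.
  have -> : v = 1%N by lia.
  exact: Q1.
have pr := pdiv_prime v1; have pv := pdiv_dvd v.
set p := pdiv v in pr pv.
have [m cm Ev] := pfactor_coprime pr v0.
have m0 : (0 < m)%N by move: v0; rewrite Ev muln_gt0 => /andP [].
have pe1 : (1 < p ^ logn p v)%N.
  rewrite -(expn0 p) ltn_exp2l ?prime_gt1 // logn_gt0 mem_primes pr v0 pv; by [].
rewrite Ev; apply: Qmul; last exact: Qpp (hyp p pr pv).
apply: IH => //.
  have mv : (m < v)%N by rewrite {1}Ev ltn_Pmulr.
  lia.
move=> q qr qm.
have qv : (q %| v)%N by rewrite Ev dvdn_mulr.
have qp : q != p.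
  apply: contraTneq qm => ->; by rewrite -prime_coprime // coprime_sym.
have -> : logn q m = logn q v.
  rewrite Ev lognM // ?expn_gt0 ?prime_gt0 //.
  by rewrite lognX (logn_prime q pr) (negbTE qp) muln0 addn0.
exact: hyp q qr qv.
Qed.

Local Close Scope ring_scope.
Unset Implicit Arguments.

Theorem mainTheorem7 (v : nat) :
  (0 < v)%N ->
  (forall p : nat, prime p -> (p %| v)%N -> (p ^ logn p v = 1 %[mod 4])%N) ->
  exists_BRDF (3 * v) 3 4 1.
Proof. by move=> v0 hyp; apply: Q_brdf; apply: Qv. Qed.
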